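(* Let $p\in(0,1)$, let $(\mathcal M,d,0)$ be a pointed $p$-metric space with $\mathcal M=\{0,x,y,z\}$ (four distinct points), and let $a\in\mathbb R^{\mathcal M\setminus\{0\}}$ with $a_z=0$. Let $T$ be the tree on $\mathcal M$ rooted at $0$ with edges $\{0,z\},\{z,x\},\{z,y\}$. Put $d_{x0}=d(x,0)$, $d_{y0}=d(y,0)$, $d_{xy}=d(x,y)$ and \[C:=|a_x+a_y|^p\frac{d_{x0}^p+d_{y0}^p-d_{xy}^p}{2}+|a_x|^p\frac{d_{xy}^p+d_{x0}^p-d_{y0}^p}{2}+|a_y|^p\frac{d_{xy}^p+d_{y0}^p-d_{x0}^p}{2}.\] Then $T(a)^p\ge C$ and \[C\le\|a_x\delta(x)+a_y\delta(y)\|_{\mathcal F_p(\{0,x,y\})}^p,\] with equality in the latter inequality if and only if at least one of the following holds: $d_{x0}^p+d_{y0}^p=d_{xy}^p$, $d_{x0}^p+d_{xy}^p=d_{y0}^p$, $d_{y0}^p+d_{xy}^p=d_{x0}^p$, $a_xa_y=0$, $a_x=-a_y$.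
   Context: A $p$-metric space is a set with $d$ such that $d^p$ is a metric; pointed means a distinguished point $0$. A $p$-Banach space is a complete vector space with a $p$-norm. $\delta(x)$ is evaluation at $x$ on real functions vanishing at $0$, and $\mathcal F_p$ of a pointed $p$-metric space is the completion of $\mathrm{span}\{\delta(x)\}$ under $\|\sum a_i\delta(x_i)\|=\sup\|\sum a_if(x_i)\|_Y$ over $p$-Banach $Y$ and $1$-Lipschitz $f$ into $Y$ vanishing at $0$; $\{0,x,y\}$ carries the restricted metric. For the rooted tree $T$ and $w\ne0$: $\mathrm{pred}_T(w)$ is the neighbour of $w$ on the path to $0$, $V_w^T$ the vertex set of the subtree rooted at $w$, and $T(a)=\big(\sum_{w\in\mathcal M\setminus\{0\}}|(\sum_{v\in V_w^T}a_v)d(\mathrm{pred}_T(w),w)|^p\big)^{1/p}$. *)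

(* Defs.v *)
From Stdlib Require Import Reals Lra List.
From Coquelicot Require Import Coquelicot.
Open Scope R_scope.

(* Real power x^q for x >= 0, with the convention 0^q = 0 (q > 0 in all uses).
   (Stdlib's Rpower 0 q would be 1, hence this wrapper.) *)
Definition rpow (x q : R) : R := if Rle_dec x 0 then 0 else Rpower x q.

Definition is_pmetric (p : R) {S : Type} (d : S -> S -> R) : Prop :=
  (forall u v, 0 <= d u v) /\
  (forall u v, d u v = 0 <-> u = v) /\
  (forall u v, d u v = d v u) /\
  (forall u v w, rpow (d u w) p <= rpow (d u v) p + rpow (d v w) p).

Record pBanach (p : R) := PBanach {
  pB_space :> ModuleSpace R_Ring;
  pB_norm : pB_space -> R;
  pB_norm_ge0 : forall v, 0 <= pB_norm v;
  pB_norm_eq0 : forall v, pB_norm v = 0 -> v = zero;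
  pB_norm_scal : forall (l : R) v, pB_norm (scal l v) = Rabs l * pB_norm v;
  pB_norm_ptri : forall u v,
      rpow (pB_norm (plus u v)) p <= rpow (pB_norm u) p + rpow (pB_norm v) p;
  pB_complete : forall u : nat -> pB_space,
      (forall eps, 0 < eps -> exists N, forall m n, (N <= m)%nat -> (N <= n)%nat ->
         pB_norm (minus (u m) (u n)) < eps) ->
      exists l, forall eps, 0 < eps -> exists N, forall n, (N <= n)%nat ->
         pB_norm (minus (u n) l) < eps
}.
Arguments pB_norm {p} _ _.

Fixpoint vsum {V : ModuleSpace R_Ring} (l : list V) : V :=
  match l with nil => zero | cons v l' => plus v (vsum l') end.

(* Norm in F_p(S,d,s0) of the finitely supported element sum_i c_i delta(s_i),
   given as the list of pairs (c_i, s_i):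
   sup over p-Banach Y and 1-Lipschitz f : S -> Y with f s0 = 0 of
   || sum_i c_i f(s_i) ||_Y.  (The completion does not affect the norm of
   elements of the span.) *)
Definition Fp_norm_set (p : R) {S : Type} (d : S -> S -> R) (s0 : S)
    (c : list (R * S)) : R -> Prop :=
  fun r => exists (Y : pBanach p) (f : S -> Y),
    f s0 = zero /\
    (forall u v, pB_norm Y (minus (f u) (f v)) <= d u v) /\
    r = pB_norm Y (vsum (map (fun cs => scal (fst cs) (f (snd cs))) c)).

Definition Fp_norm (p : R) {S : Type} (d : S -> S -> R) (s0 : S)
    (c : list (R * S)) : R :=
  real (Lub_Rbar (Fp_norm_set p d s0 c)).

Inductive pt4 : Type := P0 | Px | Py | Pz.

Definition sub3 : Type := { m : pt4 | m = P0 \/ m = Px \/ m = Py }.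
Definition s3_0 : sub3 := exist _ P0 (or_introl eq_refl).
Definition s3_x : sub3 := exist _ Px (or_intror (or_introl eq_refl)).
Definition s3_y : sub3 := exist _ Py (or_intror (or_intror eq_refl)).
Definition d3 (d : pt4 -> pt4 -> R) (u v : sub3) : R := d (proj1_sig u) (proj1_sig v).

(* The functional T(a) for a rooted tree, given its non-root vertices,
   the predecessor map and the vertex sets V_w of the subtrees rooted at w. *)
Fixpoint Rsum_list (l : list R) : R :=
  match l with nil => 0 | cons r l' => r + Rsum_list l' end.

Definition tree_T {M : Type} (p : R) (nonroot : list M) (pred : M -> M)
    (V : M -> list M) (d : M -> M -> R) (a : M -> R) : R :=
  rpow (Rsum_list (map (fun w =>
           rpow (Rabs (Rsum_list (map a (V w)) * d (pred w) w)) p) nonroot))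
       (1 / p).

Definition T4_nonroot : list pt4 := Px :: Py :: Pz :: nil.
Definition T4_pred (w : pt4) : pt4 :=
  match w with P0 => P0 | Px => Pz | Py => Pz | Pz => P0 end.
Definition T4_V (w : pt4) : list pt4 :=
  match w with
  | P0 => P0 :: Px :: Py :: Pz :: nil
  | Px => Px :: nil
  | Py => Py :: nil
  | Pz => Pz :: Px :: Py :: nil
  end.

(* Main.v *)
Require Import Defs.
From Stdlib Require Import Reals Lra Lia.
From Coquelicot Require Import Coquelicot.
Open Scope R_scope.


Lemma rpow_0 q : rpow 0 q = 0.
Proof. unfold rpow; destruct (Rle_dec 0 0); [reflexivity| lra]. Qed.
Lemma rpow_pos x q : 0 < x -> rpow x q = Rpower x q.
Proof. intros; unfold rpow; destruct (Rle_dec x 0); [lra| reflexivity]. Qed.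
Lemma Rpower_gt0 x q : 0 < Rpower x q.
Proof. unfold Rpower; apply exp_pos. Qed.
Lemma rpow_ge0 x q : 0 <= rpow x q.
Proof. unfold rpow; destruct (Rle_dec x 0); [lra|]. left; apply Rpower_gt0. Qed.
Lemma rpow_gt0 x q : 0 < x -> 0 < rpow x q.
Proof. intros; rewrite rpow_pos by lra; apply Rpower_gt0. Qed.
Lemma rpow_eq0 x q : 0 <= x -> rpow x q = 0 -> x = 0.
Proof. intros H H1. destruct H as [H|H]; [|auto]. pose proof (rpow_gt0 x q H); lra. Qed.
Lemma rpow_le x y q : 0 < q -> 0 <= x <= y -> rpow x q <= rpow y q.
Proof.
  intros Hq [H0 H1]. destruct H0 as [H0|H0].
  - rewrite !rpow_pos by lra. apply Rle_Rpower_l; lra.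
  - subst. rewrite rpow_0; apply rpow_ge0.
Qed.
Lemma rpow_lt x y q : 0 < q -> 0 <= x < y -> rpow x q < rpow y q.
Proof.
  intros Hq [H0 H1]. destruct H0 as [H0|H0].
  - rewrite !rpow_pos by lra. apply Rlt_Rpower_l; lra.
  - subst. rewrite rpow_0; apply rpow_gt0; lra.
Qed.
Lemma rpow_lt_inv x y q : 0 < q -> 0 <= x -> 0 <= y -> rpow x q < rpow y q -> x < y.
Proof.
  intros. destruct (Rlt_le_dec x y); auto.
  assert (rpow y q <= rpow x q) by (apply rpow_le; lra). lra.
Qed.
Lemma rpow_le_inv x y q : 0 < q -> 0 <= x -> 0 <= y -> rpow x q <= rpow y q -> x <= y.
Proof.
  intros. destruct (Rle_lt_dec x y); auto.
  assert (rpow y q < rpow x q) by (apply rpow_lt; lra). lra.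
Qed.
Lemma rpow_mult x y q : 0 <= x -> 0 <= y -> rpow (x*y) q = rpow x q * rpow y q.
Proof.
  intros [Hx|Hx] [Hy|Hy]; subst; rewrite ?Rmult_0_l, ?Rmult_0_r, ?rpow_0; try ring.
  rewrite !rpow_pos by (try apply Rmult_lt_0_compat; lra).
  rewrite Rpower_mult_distr; auto.
Qed.
Lemma rpow_rpow x q r : 0 <= x -> rpow (rpow x q) r = rpow x (q*r).
Proof.
  intros [Hx|Hx]; [|subst; rewrite !rpow_0; auto].
  rewrite (rpow_pos x q) by auto. rewrite rpow_pos by apply Rpower_gt0.
  rewrite rpow_pos by auto. apply Rpower_mult.
Qed.
Lemma rpow_1 x : 0 <= x -> rpow x 1 = x.
Proof. intros [Hx|Hx]; [rewrite rpow_pos by auto; apply Rpower_1; auto| subst; apply rpow_0]. Qed.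
Lemma rpow_inv1 x q : 0 < q -> 0 <= x -> rpow (rpow x q) (1/q) = x.
Proof. intros. rewrite rpow_rpow by auto. replace (q*(1/q)) with 1 by (field; lra). apply rpow_1; auto. Qed.
Lemma rpow_inv2 x q : 0 < q -> 0 <= x -> rpow (rpow x (1/q)) q = x.
Proof. intros. rewrite rpow_rpow by auto. replace ((1/q)*q) with 1 by (field; lra). apply rpow_1; auto. Qed.

Lemma bern r p : 0 < p < 1 -> 0 < r -> Rpower r p <= 1 + p * (r - 1).
Proof.
  intros Hp Hr. unfold Rpower. set (L := ln r).
  assert (Er : exp L = r) by (apply exp_ln; auto).
  set (E := exp (p*L)). set (F := exp (-(p*L))). set (G := exp ((1-p)*L)).
  assert (EF : E * F = 1) by (unfold E, F; rewrite <- exp_plus; replace (p*L + - (p*L)) with 0 by ring; apply exp_0).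
  assert (EG : E * G = r) by (unfold E, G; rewrite <- exp_plus, <- Er; f_equal; ring).
  pose proof (exp_ineq1_le (-(p*L))) as HF. pose proof (exp_ineq1_le ((1-p)*L)) as HG.
  fold F in HF. fold G in HG. assert (E > 0) by apply exp_pos.
  rewrite <- EG.
  assert (0 <= E * ((1-p)*(F - (1 + -(p*L))) + p*(G - (1 + (1-p)*L)))).
  { apply Rmult_le_pos; [lra|]. apply Rplus_le_le_0_compat; apply Rmult_le_pos; lra. }
  nra.
Qed.

Lemma tangent x m p : 0 < p < 1 -> 0 < m -> 0 <= x ->
  rpow x p <= rpow m p + p * Rpower m (p-1) * (x - m).
Proof.
  intros Hp Hm Hx.
  assert (Hmp : Rpower m p = Rpower m (p-1) * m).
  { replace p with ((p-1)+1) at 1 by ring. rewrite Rpower_plus, Rpower_1; auto. }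
  rewrite (rpow_pos m) by auto. pose proof (Rpower_gt0 m (p-1)).
  destruct Hx as [Hx|Hx].
  - rewrite rpow_pos by auto.
    replace x with ((x/m)*m) at 1 by (field; lra).
    rewrite <- Rpower_mult_distr by (try apply Rdiv_lt_0_compat; lra).
    pose proof (bern (x/m) p Hp ltac:(apply Rdiv_lt_0_compat; lra)).
    rewrite Hmp.
    assert (HH : Rpower (x/m) p * (Rpower m (p-1) * m) <= (1 + p*(x/m - 1)) * (Rpower m (p-1) * m)).
    { apply Rmult_le_compat_r; [apply Rmult_le_pos; lra| assumption]. }
    replace ((1 + p*(x/m - 1)) * (Rpower m (p-1) * m)) with
      (Rpower m (p - 1) * m + p * Rpower m (p - 1) * (x - m)) in HH by (field; lra).
    lra.
  - subst. rewrite rpow_0. rewrite Hmp. assert (0 <= Rpower m (p-1) * m * (1-p)) by (apply Rmult_le_pos; [apply Rmult_le_pos|]; lra). lra.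
Qed.

Lemma concave x y l p : 0 < p < 1 -> 0 <= x -> 0 <= y -> 0 <= l <= 1 ->
  l * rpow x p + (1-l) * rpow y p <= rpow (l*x + (1-l)*y) p.
Proof.
  intros Hp Hx Hy Hl. set (m := l*x + (1-l)*y).
  assert (Hm0 : 0 <= m) by (unfold m; nra).
  destruct Hm0 as [Hm|Hm].
  - pose proof (tangent x m p Hp Hm Hx). pose proof (tangent y m p Hp Hm Hy).
    set (k := p * Rpower m (p-1)) in *.
    assert (l * rpow x p + (1-l) * rpow y p <= l*(rpow m p + k*(x-m)) + (1-l)*(rpow m p + k*(y-m))).
    { apply Rplus_le_compat; apply Rmult_le_compat_l; lra. }
    replace (l*(rpow m p + k*(x-m)) + (1-l)*(rpow m p + k*(y-m))) with
      (rpow m p + k*(m - m)) in H1 by (unfold m; ring). lra.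
  - rewrite <- Hm, rpow_0.
    assert (l*x = 0) by (unfold m in Hm; nra). assert ((1-l)*y = 0) by (unfold m in Hm; nra).
    destruct (Rmult_integral _ _ H) as [->| ->]; [|rewrite rpow_0];
    (destruct (Rmult_integral _ _ H0) as [H2| ->]; [|rewrite rpow_0]); try lra.
    + assert (l = 1) by lra. subst. lra.
Qed.

Lemma subadd_strict x y p : 0 < p < 1 -> 0 < x -> 0 < y -> rpow (x+y) p < rpow x p + rpow y p.
Proof.
  intros Hp Hx Hy. rewrite !rpow_pos by lra.
  assert (Hd : forall z, 0 < z -> Rpower z p = z * / Rpower z (1-p)).
  { intros z Hz. replace p with (1 + -(1-p)) at 1 by ring. rewrite Rpower_plus, Rpower_1, Rpower_Ropp; auto. }
  rewrite !Hd by lra.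
  assert (Rpower x (1-p) < Rpower (x+y) (1-p)) by (apply Rlt_Rpower_l; lra).
  assert (Rpower y (1-p) < Rpower (x+y) (1-p)) by (apply Rlt_Rpower_l; lra).
  pose proof (Rpower_gt0 x (1-p)). pose proof (Rpower_gt0 y (1-p)).
  assert (/ Rpower (x+y) (1-p) < / Rpower x (1-p)) by (apply Rinv_lt_contravar; nra).
  assert (/ Rpower (x+y) (1-p) < / Rpower y (1-p)) by (apply Rinv_lt_contravar; nra).
  nra.
Qed.

Lemma subadd x y p : 0 < p < 1 -> 0 <= x -> 0 <= y -> rpow (x+y) p <= rpow x p + rpow y p.
Proof.
  intros Hp [Hx|Hx] [Hy|Hy]; subst; rewrite ?Rplus_0_l, ?Rplus_0_r, ?rpow_0; try lra.
  left; apply subadd_strict; auto.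
Qed.

Lemma abs_subadd a b p : 0 < p < 1 -> rpow (Rabs (a+b)) p <= rpow (Rabs a) p + rpow (Rabs b) p.
Proof.
  intros. apply Rle_trans with (rpow (Rabs a + Rabs b) p).
  - apply rpow_le; [lra|]. split; [apply Rabs_pos| apply Rabs_triang].
  - apply subadd; auto; apply Rabs_pos.
Qed.

Lemma abs_subadd_strict a b p : 0 < p < 1 -> a <> 0 -> b <> 0 ->
  rpow (Rabs (a+b)) p < rpow (Rabs a) p + rpow (Rabs b) p.
Proof.
  intros. apply Rle_lt_trans with (rpow (Rabs a + Rabs b) p).
  - apply rpow_le; [lra|]. split; [apply Rabs_pos| apply Rabs_triang].
  - apply subadd_strict; auto; apply Rabs_pos_lt; auto.
Qed.


Lemma seg p b c t e : 0 < p < 1 -> b < c -> b <= t <= c -> (e <= b \/ c <= e) ->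
  ((c-t)/(c-b)) * rpow (Rabs (b-e)) p + (1 - (c-t)/(c-b)) * rpow (Rabs (c-e)) p
  <= rpow (Rabs (t-e)) p.
Proof.
  intros Hp Hbc Ht He. set (l := (c-t)/(c-b)).
  assert (Hl : 0 <= l <= 1).
  { unfold l; split; [apply Rdiv_le_0_compat; lra|]. apply -> Rcomplements.Rdiv_le_1; lra. }
  assert (Ht' : t = l*b + (1-l)*c) by (unfold l; field; lra).
  destruct He as [He|He].
  - rewrite !Rabs_right by lra.
    replace (t-e) with (l*(b-e) + (1-l)*(c-e)) by (rewrite Ht'; ring).
    apply concave; lra.
  - rewrite !Rabs_left1 by lra.
    replace (-(t-e)) with (l*(-(b-e)) + (1-l)*(-(c-e))) by (rewrite Ht'; ring).
    apply concave; lra.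
Qed.

Lemma outl p b t e : 0 < p -> t <= b -> b <= e -> rpow (Rabs (b-e)) p <= rpow (Rabs (t-e)) p.
Proof. intros. apply rpow_le; auto. rewrite !Rabs_left1 by lra. lra. Qed.
Lemma outr p b t e : 0 < p -> b <= t -> e <= b -> rpow (Rabs (b-e)) p <= rpow (Rabs (t-e)) p.
Proof. intros. apply rpow_le; auto. rewrite !Rabs_right by lra. lra. Qed.

Definition hh p k1 k2 k3 b1 b2 b3 t :=
  k1 * rpow (Rabs (t-b1)) p + k2 * rpow (Rabs (t-b2)) p + k3 * rpow (Rabs (t-b3)) p.

Lemma hh_out_l p k1 k2 k3 b1 b2 b3 t b : 0 < p -> 0 <= k1 -> 0 <= k2 -> 0 <= k3 ->
  t <= b -> b <= b1 -> b <= b2 -> b <= b3 ->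
  hh p k1 k2 k3 b1 b2 b3 b <= hh p k1 k2 k3 b1 b2 b3 t.
Proof.
  intros. unfold hh. repeat apply Rplus_le_compat; apply Rmult_le_compat_l; auto; apply outl; auto.
Qed.
Lemma hh_out_r p k1 k2 k3 b1 b2 b3 t b : 0 < p -> 0 <= k1 -> 0 <= k2 -> 0 <= k3 ->
  b <= t -> b1 <= b -> b2 <= b -> b3 <= b ->
  hh p k1 k2 k3 b1 b2 b3 b <= hh p k1 k2 k3 b1 b2 b3 t.
Proof.
  intros. unfold hh. repeat apply Rplus_le_compat; apply Rmult_le_compat_l; auto; apply outr; auto.
Qed.
Lemma hh_seg p k1 k2 k3 b1 b2 b3 t b c : 0 < p < 1 -> 0 <= k1 -> 0 <= k2 -> 0 <= k3 ->
  b < c -> b <= t <= c -> (b1 <= b \/ c <= b1) -> (b2 <= b \/ c <= b2) -> (b3 <= b \/ c <= b3) ->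
  Rmin (hh p k1 k2 k3 b1 b2 b3 b) (hh p k1 k2 k3 b1 b2 b3 c) <= hh p k1 k2 k3 b1 b2 b3 t.
Proof.
  intros Hp H1 H2 H3 Hbc Ht E1 E2 E3.
  pose proof (seg p b c t b1 Hp Hbc Ht E1).
  pose proof (seg p b c t b2 Hp Hbc Ht E2).
  pose proof (seg p b c t b3 Hp Hbc Ht E3).
  set (l := (c-t)/(c-b)) in *.
  assert (Hl : 0 <= l <= 1).
  { unfold l; split; [apply Rdiv_le_0_compat; lra|]. apply -> Rcomplements.Rdiv_le_1; lra. }
  apply Rle_trans with (l * hh p k1 k2 k3 b1 b2 b3 b + (1-l) * hh p k1 k2 k3 b1 b2 b3 c).
  - pose proof (Rmin_l (hh p k1 k2 k3 b1 b2 b3 b) (hh p k1 k2 k3 b1 b2 b3 c)).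
    pose proof (Rmin_r (hh p k1 k2 k3 b1 b2 b3 b) (hh p k1 k2 k3 b1 b2 b3 c)).
    set (mm := Rmin _ _) in *. nra.
  - unfold hh.
    apply Rle_trans with (k1 * (l * rpow (Rabs (b - b1)) p + (1 - l) * rpow (Rabs (c - b1)) p)
      + k2 * (l * rpow (Rabs (b - b2)) p + (1 - l) * rpow (Rabs (c - b2)) p)
      + k3 * (l * rpow (Rabs (b - b3)) p + (1 - l) * rpow (Rabs (c - b3)) p)).
    + right; ring.
    + repeat apply Rplus_le_compat; apply Rmult_le_compat_l; auto.
Qed.

Lemma hh_min p k1 k2 k3 b1 b2 b3 t : 0 < p < 1 -> 0 <= k1 -> 0 <= k2 -> 0 <= k3 ->
  Rmin (hh p k1 k2 k3 b1 b2 b3 b1) (Rmin (hh p k1 k2 k3 b1 b2 b3 b2) (hh p k1 k2 k3 b1 b2 b3 b3))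
  <= hh p k1 k2 k3 b1 b2 b3 t.
Proof.
  intros Hp H1 H2 H3.
  set (f := hh p k1 k2 k3 b1 b2 b3).
  assert (M1 : Rmin (f b1) (Rmin (f b2) (f b3)) <= f b1) by apply Rmin_l.
  assert (M2 : Rmin (f b1) (Rmin (f b2) (f b3)) <= f b2) by
    (eapply Rle_trans; [apply Rmin_r| apply Rmin_l]).
  assert (M3 : Rmin (f b1) (Rmin (f b2) (f b3)) <= f b3) by
    (eapply Rle_trans; [apply Rmin_r| apply Rmin_r]).
  set (mm := Rmin _ _) in *.
  assert (S : forall b c, b < c -> b <= t <= c -> (b1 <= b \/ c <= b1) -> (b2 <= b \/ c <= b2) -> (b3 <= b \/ c <= b3) ->
     mm <= f b -> mm <= f c -> mm <= f t).
  { intros b c ? ? ? ? ? ? ?. eapply Rle_trans; [|apply hh_seg with (b:=b) (c:=c); auto].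
    apply Rmin_glb; auto. }
  assert (L : forall b, t <= b -> b <= b1 -> b <= b2 -> b <= b3 -> mm <= f b -> mm <= f t).
  { intros. eapply Rle_trans; [eassumption|apply hh_out_l; auto; lra]. }
  assert (R : forall b, b <= t -> b1 <= b -> b2 <= b -> b3 <= b -> mm <= f b -> mm <= f t).
  { intros. eapply Rle_trans; [eassumption|apply hh_out_r; auto; lra]. }
  clearbody f mm.
  destruct (Rle_dec t b1); destruct (Rle_dec t b2); destruct (Rle_dec t b3);
  destruct (Rle_dec b1 b2); destruct (Rle_dec b1 b3); destruct (Rle_dec b2 b3);
  first
  [ solve [apply (L b1); auto; lra] | solve [apply (L b2); auto; lra] | solve [apply (L b3); auto; lra]
  | solve [apply (R b1); auto; lra] | solve [apply (R b2); auto; lra] | solve [apply (R b3); auto; lra]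
  | solve [apply (S b1 b2); auto; lra] | solve [apply (S b2 b1); auto; lra]
  | solve [apply (S b1 b3); auto; lra] | solve [apply (S b3 b1); auto; lra]
  | solve [apply (S b2 b3); auto; lra] | solve [apply (S b3 b2); auto; lra]
  | idtac ].
Qed.


Lemma Rmin_scale c a b : 0 <= c -> Rmin (c*a) (c*b) = c * Rmin a b.
Proof.
  intros Hc. unfold Rmin. destruct (Rle_dec (c*a) (c*b)); destruct (Rle_dec a b); try reflexivity.
  - destruct Hc as [Hc|Hc]; [|subst; ring]. exfalso. apply n. apply Rmult_le_reg_l with c; auto.
  - exfalso. apply n. apply Rmult_le_compat_l; auto.
Qed.

Lemma hh_scal p k1 k2 k3 b1 b2 b3 t l :
  hh p k1 k2 k3 (l*b1) (l*b2) (l*b3) (l*t) = rpow (Rabs l) p * hh p k1 k2 k3 b1 b2 b3 t.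
Proof.
  unfold hh. rewrite <- !Rmult_minus_distr_l, !Rabs_mult, !rpow_mult by apply Rabs_pos. ring.
Qed.

Lemma hh_add p k1 k2 k3 b1 b2 b3 c1 c2 c3 t s : 0 < p < 1 -> 0 <= k1 -> 0 <= k2 -> 0 <= k3 ->
  hh p k1 k2 k3 (b1+c1) (b2+c2) (b3+c3) (t+s) <= hh p k1 k2 k3 b1 b2 b3 t + hh p k1 k2 k3 c1 c2 c3 s.
Proof.
  intros. unfold hh.
  replace (t + s - (b1 + c1)) with ((t-b1) + (s-c1)) by ring.
  replace (t + s - (b2 + c2)) with ((t-b2) + (s-c2)) by ring.
  replace (t + s - (b3 + c3)) with ((t-b3) + (s-c3)) by ring.
  pose proof (abs_subadd (t-b1) (s-c1) p H). pose proof (abs_subadd (t-b2) (s-c2) p H).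
  pose proof (abs_subadd (t-b3) (s-c3) p H).
  apply Rle_trans with (k1 * (rpow (Rabs (t - b1)) p + rpow (Rabs (s - c1)) p) +
     k2 * (rpow (Rabs (t - b2)) p + rpow (Rabs (s - c2)) p) +
     k3 * (rpow (Rabs (t - b3)) p + rpow (Rabs (s - c3)) p)).
  - repeat apply Rplus_le_compat; apply Rmult_le_compat_l; auto.
  - right; ring.
Qed.

Definition hw p kx ky kxy (w : R * R) := hh p kx ky kxy (fst w) (- snd w) 0.
Definition mm p kx ky kxy (w : R * R) :=
  Rmin (hw p kx ky kxy w (fst w)) (Rmin (hw p kx ky kxy w (- snd w)) (hw p kx ky kxy w 0)).

Lemma hh_ge0 p k1 k2 k3 b1 b2 b3 t : 0 <= k1 -> 0 <= k2 -> 0 <= k3 -> 0 <= hh p k1 k2 k3 b1 b2 b3 t.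
Proof.
  intros. unfold hh. pose proof (rpow_ge0 (Rabs (t-b1)) p). pose proof (rpow_ge0 (Rabs (t-b2)) p).
  pose proof (rpow_ge0 (Rabs (t-b3)) p). nra.
Qed.

Lemma mm_le p kx ky kxy w t : 0 < p < 1 -> 0 <= kx -> 0 <= ky -> 0 <= kxy ->
  mm p kx ky kxy w <= hw p kx ky kxy w t.
Proof. intros. unfold mm, hw. apply hh_min; auto. Qed.

Lemma mm_att p kx ky kxy w : exists t, mm p kx ky kxy w = hw p kx ky kxy w t.
Proof.
  unfold mm. unfold Rmin at 2. destruct (Rle_dec _ _); unfold Rmin; destruct (Rle_dec _ _); eauto.
Qed.

Lemma mm_ge0 p kx ky kxy w : 0 <= kx -> 0 <= ky -> 0 <= kxy -> 0 <= mm p kx ky kxy w.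
Proof. intros. destruct (mm_att p kx ky kxy w) as [t ->]. apply hh_ge0; auto. Qed.

Lemma mm_scal p kx ky kxy w l : 0 < p < 1 -> 0 <= kx -> 0 <= ky -> 0 <= kxy ->
  mm p kx ky kxy (l * fst w, l * snd w) = rpow (Rabs l) p * mm p kx ky kxy w.
Proof.
  intros. unfold mm, hw; simpl.
  replace (- (l * snd w)) with (l * (- snd w)) by ring.
  replace 0 with (l*0) by ring.
  rewrite !hh_scal. rewrite !Rmin_scale by apply rpow_ge0. rewrite Rmult_0_r; reflexivity.
Qed.

Lemma mm_tri p kx ky kxy u v : 0 < p < 1 -> 0 <= kx -> 0 <= ky -> 0 <= kxy ->
  mm p kx ky kxy (fst u + fst v, snd u + snd v) <= mm p kx ky kxy u + mm p kx ky kxy v.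
Proof.
  intros. destruct (mm_att p kx ky kxy u) as [t Ht]. destruct (mm_att p kx ky kxy v) as [s Hs].
  rewrite Ht, Hs. eapply Rle_trans; [apply (mm_le _ _ _ _ _ (t+s)); auto|].
  unfold hw; simpl. replace (- (snd u + snd v)) with (- snd u + - snd v) by ring.
  replace 0 with (0+0) at 1 by ring. apply hh_add; auto.
Qed.

Lemma mm_low1 p kx ky kxy w : 0 < p < 1 -> 0 <= kx -> 0 <= ky -> 0 <= kxy ->
  Rmin kx (Rmin ky kxy) * rpow (Rabs (fst w)) p <= mm p kx ky kxy w.
Proof.
  intros. destruct (mm_att p kx ky kxy w) as [t ->]. unfold hw, hh.
  set (k := Rmin kx (Rmin ky kxy)).
  assert (k <= kx) by apply Rmin_l.
  assert (k <= kxy) by (eapply Rle_trans; [apply Rmin_r| apply Rmin_r]).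
  assert (0 <= k) by (apply Rmin_glb; auto; apply Rmin_glb; auto).
  pose proof (abs_subadd (-(t - fst w)) (t - 0) p H).
  replace (-(t - fst w) + (t-0)) with (fst w) in H6 by ring. rewrite Rabs_Ropp in H6.
  pose proof (rpow_ge0 (Rabs (t - fst w)) p). pose proof (rpow_ge0 (Rabs (t - 0)) p).
  pose proof (rpow_ge0 (Rabs (t - - snd w)) p). nra.
Qed.

Lemma mm_low2 p kx ky kxy w : 0 < p < 1 -> 0 <= kx -> 0 <= ky -> 0 <= kxy ->
  Rmin kx (Rmin ky kxy) * rpow (Rabs (snd w)) p <= mm p kx ky kxy w.
Proof.
  intros. destruct (mm_att p kx ky kxy w) as [t ->]. unfold hw, hh.
  set (k := Rmin kx (Rmin ky kxy)).
  assert (k <= ky) by (eapply Rle_trans; [apply Rmin_r| apply Rmin_l]).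
  assert (k <= kxy) by (eapply Rle_trans; [apply Rmin_r| apply Rmin_r]).
  assert (0 <= k) by (apply Rmin_glb; auto; apply Rmin_glb; auto).
  pose proof (abs_subadd (t - - snd w) (-(t - 0)) p H).
  replace ((t - - snd w) + -(t-0)) with (snd w) in H6 by ring. rewrite Rabs_Ropp in H6.
  pose proof (rpow_ge0 (Rabs (t - fst w)) p). pose proof (rpow_ge0 (Rabs (t - 0)) p).
  pose proof (rpow_ge0 (Rabs (t - - snd w)) p). nra.
Qed.

Lemma mm_up p kx ky kxy w : 0 < p < 1 -> 0 <= kx -> 0 <= ky -> 0 <= kxy ->
  mm p kx ky kxy w <= kx * rpow (Rabs (fst w)) p + ky * rpow (Rabs (snd w)) p.
Proof.
  intros. eapply Rle_trans; [apply (mm_le _ _ _ _ _ 0); auto|]. unfold hw, hh.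
  rewrite ?Rminus_0_l, ?Rminus_0_r, ?Ropp_involutive, ?Ropp_0, ?Rabs_Ropp, ?Rabs_R0, ?rpow_0. right; ring.
Qed.

Lemma mm_eq0 p kx ky kxy w : 0 < p < 1 -> 0 < kx -> 0 < ky -> 0 < kxy ->
  mm p kx ky kxy w = 0 -> w = (0,0).
Proof.
  intros Hp H1 H2 H3 H0. destruct w as [w1 w2].
  assert (Hk : 0 < Rmin kx (Rmin ky kxy)) by (apply Rmin_glb_lt; auto; apply Rmin_glb_lt; auto).
  pose proof (mm_low1 p kx ky kxy (w1,w2) Hp ltac:(lra) ltac:(lra) ltac:(lra)).
  pose proof (mm_low2 p kx ky kxy (w1,w2) Hp ltac:(lra) ltac:(lra) ltac:(lra)).
  simpl in *. rewrite H0 in *.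
  pose proof (rpow_ge0 (Rabs w1) p). pose proof (rpow_ge0 (Rabs w2) p).
  assert (E1 : rpow (Rabs w1) p = 0) by nra. assert (E2 : rpow (Rabs w2) p = 0) by nra.
  apply (rpow_eq0 _ p) in E1; [|apply Rabs_pos]. apply (rpow_eq0 _ p) in E2; [|apply Rabs_pos].
  apply Rabs_eq_0 in E1. apply Rabs_eq_0 in E2. subst; reflexivity.
Qed.


Definition V2 := prod_ModuleSpace R_Ring R_ModuleSpace R_ModuleSpace.
Definition nrm p kx ky kxy (w : V2) : R := rpow (mm p kx ky kxy w) (1/p).


Lemma nrm_ge0 p kx ky kxy w : 0 <= nrm p kx ky kxy w.
Proof. apply rpow_ge0. Qed.

Lemma nrm_eq0 p kx ky kxy (Hp : 0 < p < 1) (H1 : 0 < kx) (H2 : 0 < ky) (H3 : 0 < kxy) w :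
  nrm p kx ky kxy w = 0 -> w = zero.
Proof.
  intros H. unfold nrm in H. apply rpow_eq0 in H; [|apply mm_ge0; lra].
  apply mm_eq0 in H; auto.
Qed.

Lemma nrm_scal p kx ky kxy (Hp : 0 < p < 1) (H1 : 0 < kx) (H2 : 0 < ky) (H3 : 0 < kxy) (l : R) (w : V2) :
  nrm p kx ky kxy (scal l w) = Rabs l * nrm p kx ky kxy w.
Proof.
  unfold nrm. change (scal l w) with ((l * fst w, l * snd w) : R*R).
  rewrite mm_scal by (auto; lra). rewrite rpow_mult by (apply rpow_ge0 || (apply mm_ge0; lra)).
  rewrite rpow_inv1 by (try apply Rabs_pos; lra). reflexivity.
Qed.

Lemma nrm_ptri p kx ky kxy (Hp : 0 < p < 1) (H1 : 0 < kx) (H2 : 0 < ky) (H3 : 0 < kxy) (u v : V2) :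
  rpow (nrm p kx ky kxy (plus u v)) p <= rpow (nrm p kx ky kxy u) p + rpow (nrm p kx ky kxy v) p.
Proof.
  unfold nrm. rewrite !rpow_inv2 by (lra || (apply mm_ge0; lra)).
  change (plus u v) with ((fst u + fst v, snd u + snd v) : R*R).
  apply mm_tri; auto; lra.
Qed.

Lemma nrm_lt p kx ky kxy (Hp : 0 < p < 1) (H1 : 0 < kx) (H2 : 0 < ky) (H3 : 0 < kxy) w eps :
  0 < eps -> mm p kx ky kxy w < rpow eps p -> nrm p kx ky kxy w < eps.
Proof.
  intros. unfold nrm. rewrite <- (rpow_inv1 eps p) by lra.
  apply rpow_lt. apply Rdiv_lt_0_compat; lra. split; auto. apply mm_ge0; lra.
Qed.

Lemma nrm_lt_inv p kx ky kxy (Hp : 0 < p < 1) (H1 : 0 < kx) (H2 : 0 < ky) (H3 : 0 < kxy) w e :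
  0 <= e -> nrm p kx ky kxy w < rpow e (1/p) -> mm p kx ky kxy w < e.
Proof.
  intros. unfold nrm in H0. apply rpow_lt_inv in H0; auto. apply Rdiv_lt_0_compat; lra.
  apply mm_ge0; lra.
Qed.

Lemma nrm_complete p kx ky kxy (Hp : 0 < p < 1) (H1 : 0 < kx) (H2 : 0 < ky) (H3 : 0 < kxy) :
  forall u : nat -> V2,
      (forall eps, 0 < eps -> exists N, forall m n, (N <= m)%nat -> (N <= n)%nat ->
         nrm p kx ky kxy (minus (u m) (u n)) < eps) ->
      exists l, forall eps, 0 < eps -> exists N, forall n, (N <= n)%nat ->
         nrm p kx ky kxy (minus (u n) l) < eps.
Proof.
  intros u Hu.
  set (k := Rmin kx (Rmin ky kxy)).
  assert (Hk : 0 < k) by (apply Rmin_glb_lt; auto; apply Rmin_glb_lt; auto).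
  assert (C : forall eps, 0 < eps -> exists N, forall m n, (N <= m)%nat -> (N <= n)%nat ->
     Rabs (fst (u m) - fst (u n)) < eps /\ Rabs (snd (u m) - snd (u n)) < eps).
  { intros eps He. destruct (Hu (rpow (k * rpow eps p) (1/p))) as [N HN].
    { apply rpow_gt0. apply Rmult_lt_0_compat; auto. apply rpow_gt0; auto. }
    exists N. intros m n Hm Hn. specialize (HN m n Hm Hn).
    apply nrm_lt_inv in HN; auto; [|apply Rmult_le_pos; [lra| apply rpow_ge0]].
    pose proof (mm_low1 p kx ky kxy (minus (u m) (u n)) Hp ltac:(lra) ltac:(lra) ltac:(lra)).
    pose proof (mm_low2 p kx ky kxy (minus (u m) (u n)) Hp ltac:(lra) ltac:(lra) ltac:(lra)).
    fold k in H, H0.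
    change (fst (minus (u m) (u n))) with (fst (u m) - fst (u n)) in H.
    change (snd (minus (u m) (u n))) with (snd (u m) - snd (u n)) in H0.
    idtac; split; (apply (rpow_lt_inv _ _ p); [lra| apply Rabs_pos| lra|]); apply Rmult_lt_reg_l with k; lra. }
  assert (C1 : Cauchy_crit (fun n => fst (u n))).
  { intros eps He. destruct (C eps He) as [N HN]. exists N. intros n m Hn Hm.
    unfold Rdist. apply HN; auto. }
  assert (C2 : Cauchy_crit (fun n => snd (u n))).
  { intros eps He. destruct (C eps He) as [N HN]. exists N. intros n m Hn Hm.
    unfold Rdist. apply HN; auto. }
  destruct (Rcomplete.R_complete _ C1) as [l1 Hl1].
  destruct (Rcomplete.R_complete _ C2) as [l2 Hl2].
  exists ((l1, l2) : R*R). intros eps He.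
  set (X := rpow eps p). assert (HX : 0 < X) by (apply rpow_gt0; auto).
  set (dl := rpow (X / (kx + ky)) (1/p)).
  assert (Hdl : 0 < dl) by (apply rpow_gt0; apply Rdiv_lt_0_compat; lra).
  destruct (Hl1 dl Hdl) as [N1 HN1]. destruct (Hl2 dl Hdl) as [N2 HN2].
  exists (Nat.max N1 N2). intros n Hn.
  apply nrm_lt; auto.
  eapply Rle_lt_trans; [apply mm_up; auto; lra|].
  change (fst (minus (u n) (l1,l2))) with (fst (u n) - l1).
  change (snd (minus (u n) (l1,l2))) with (snd (u n) - l2).
  assert (A1 : rpow (Rabs (fst (u n) - l1)) p < X / (kx+ky)).
  { rewrite <- (rpow_inv2 (X/(kx+ky)) p) by (try apply Rdiv_le_0_compat; lra).
    apply rpow_lt; [lra|]. split; [apply Rabs_pos|]. apply HN1. lia. }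
  assert (A2 : rpow (Rabs (snd (u n) - l2)) p < X / (kx+ky)).
  { rewrite <- (rpow_inv2 (X/(kx+ky)) p) by (try apply Rdiv_le_0_compat; lra).
    apply rpow_lt; [lra|]. split; [apply Rabs_pos|]. apply HN2. lia. }
  apply Rlt_le_trans with (kx * (X/(kx+ky)) + ky * (X/(kx+ky))).
  - apply Rplus_lt_compat; apply Rmult_lt_compat_l; auto.
  - right. unfold X. field. lra.
Qed.

Definition Y2 p kx ky kxy (Hp : 0 < p < 1) (H1 : 0 < kx) (H2 : 0 < ky) (H3 : 0 < kxy) : pBanach p :=
  PBanach p V2 (nrm p kx ky kxy) (nrm_ge0 p kx ky kxy) (nrm_eq0 p kx ky kxy Hp H1 H2 H3)
    (nrm_scal p kx ky kxy Hp H1 H2 H3) (nrm_ptri p kx ky kxy Hp H1 H2 H3)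
    (nrm_complete p kx ky kxy Hp H1 H2 H3).


Lemma key1 (V : ModuleSpace R_Ring) (X W : V) (a b : R) :
  plus (scal a X) (scal b W) = plus (scal (a+b) X) (scal (-b) (minus X W)).
Proof.
  unfold minus.
  rewrite (scal_distr_r a b X : scal (a+b) X = _), (@scal_distr_l R_Ring V), (@scal_opp_r R_Ring V),
    (@scal_opp_l R_Ring V b X : scal (-b) X = _), (@scal_opp_l R_Ring V b W : scal (-b) W = _), opp_opp.
  rewrite <- plus_assoc, (plus_assoc (scal b X)), (@plus_opp_r V), (@plus_zero_l V). reflexivity.
Qed.

Lemma key2 (V : ModuleSpace R_Ring) (X W : V) (a b : R) :
  plus (scal a X) (scal b W) = plus (scal (a+b) W) (scal a (minus X W)).
Proof.
  unfold minus.
  rewrite (scal_distr_r a b W : scal (a+b) W = _), (@scal_distr_l R_Ring V), (@scal_opp_r R_Ring V).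
  rewrite (plus_comm (scal a W) (scal b W)), (plus_comm (scal a X) (opp (scal a W))).
  rewrite <- plus_assoc, (plus_assoc (scal a W)), (@plus_opp_r V), (@plus_zero_l V), plus_comm. reflexivity.
Qed.

Lemma pn_plus p (Y : pBanach p) (u v : Y) :
  rpow (pB_norm Y (plus u v)) p <= rpow (pB_norm Y u) p + rpow (pB_norm Y v) p.
Proof. apply pB_norm_ptri. Qed.

Lemma pn_scal p (Y : pBanach p) l (u : Y) :
  rpow (pB_norm Y (scal l u)) p = rpow (Rabs l) p * rpow (pB_norm Y u) p.
Proof. rewrite pB_norm_scal, rpow_mult; auto; [apply Rabs_pos| apply pB_norm_ge0]. Qed.

Lemma lub_eq (E : R -> Prop) M : E M -> (forall r, E r -> r <= M) -> real (Lub_Rbar E) = M.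
Proof.
  intros HM Hub. destruct (Lub_Rbar_correct E) as [H1 H2].
  assert (Rbar_le M (Lub_Rbar E)) by (apply H1; auto).
  assert (Rbar_le (Lub_Rbar E) M) by (apply H2; intros r Hr; simpl; apply Hub; auto).
  destruct (Lub_Rbar E); simpl in *; try contradiction. f_equal. lra.
Qed.

Lemma rpow1 q : rpow 1 q = 1.
Proof. rewrite rpow_pos by lra. unfold Rpower. rewrite ln_1, Rmult_0_r. apply exp_0. Qed.

Ltac simp_abs :=
  repeat match goal with
  | |- context [rpow (Rabs ?e) ?q] =>
     first [ replace e with 0 by ring; rewrite Rabs_R0, rpow_0
           | replace e with 1 by ring; rewrite Rabs_R1, rpow1
           | replace e with (-(1)) by ring; rewrite Rabs_Ropp, Rabs_R1, rpow1 ]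
  end.


Lemma hw_v1 p kx ky kxy ax ay :
  hw p kx ky kxy (ax,ay) ax = ky * rpow (Rabs (ax+ay)) p + kxy * rpow (Rabs ax) p.
Proof.
  unfold hw, hh; simpl. replace (ax - ax) with 0 by ring. replace (ax - - ay) with (ax+ay) by ring.
  rewrite Rminus_0_r, Rabs_R0, rpow_0. ring.
Qed.
Lemma hw_v2 p kx ky kxy ax ay :
  hw p kx ky kxy (ax,ay) (-ay) = kx * rpow (Rabs (ax+ay)) p + kxy * rpow (Rabs ay) p.
Proof.
  unfold hw, hh; simpl. replace (- ay - - ay) with 0 by ring. replace (-ay - ax) with (-(ax+ay)) by ring.
  rewrite Rminus_0_r, !Rabs_Ropp, Rabs_R0, rpow_0. ring.
Qed.
Lemma hw_v3 p kx ky kxy ax ay :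
  hw p kx ky kxy (ax,ay) 0 = kx * rpow (Rabs ax) p + ky * rpow (Rabs ay) p.
Proof.
  unfold hw, hh; simpl. replace (0 - ax) with (-ax) by ring. replace (0 - - ay) with ay by ring.
  rewrite Rminus_0_r, !Rabs_Ropp, Rabs_R0, rpow_0. ring.
Qed.

Definition f2 (u : sub3) : V2 :=
  match proj1_sig u with Px => ((1,0) : R*R) | Py => ((0,1) : R*R) | _ => ((0,0) : R*R) end.

Lemma f2_lip p (Hp : 0 < p < 1) (d : pt4 -> pt4 -> R) (hd : is_pmetric p d)
  (H1 : 0 < rpow (d Px P0) p) (H2 : 0 < rpow (d Py P0) p) (H3 : 0 < rpow (d Px Py) p) :
  forall u v, nrm p (rpow (d Px P0) p) (rpow (d Py P0) p) (rpow (d Px Py) p) (minus (f2 u) (f2 v)) <= d3 d u v.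
Proof.
  destruct hd as [Hd0 [Hdeq [Hsym Htri]]].
  set (kx := rpow (d Px P0) p) in *. set (ky := rpow (d Py P0) p) in *. set (kxy := rpow (d Px Py) p) in *.
  assert (G : forall w t e, 0 <= e -> hw p kx ky kxy w t <= rpow e p -> nrm p kx ky kxy w <= e).
  { intros w t e He Hh. unfold nrm. rewrite <- (rpow_inv1 e p) by lra.
    apply rpow_le; [apply Rdiv_lt_0_compat; lra|]. split; [apply mm_ge0; lra|].
    eapply Rle_trans; [apply (mm_le _ _ _ _ _ t); auto; lra| exact Hh]. }
  assert (E1 : rpow (d P0 Px) p = kx) by (rewrite Hsym; reflexivity).
  assert (E2 : rpow (d P0 Py) p = ky) by (rewrite Hsym; reflexivity).
  assert (E3 : rpow (d Py Px) p = kxy) by (rewrite Hsym; reflexivity).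
  assert (E4 : forall u, rpow (d u u) p = 0) by (intros; rewrite (proj2 (Hdeq u u) eq_refl); apply rpow_0).
  assert (Hk : 0 <= kx /\ 0 <= ky /\ 0 <= kxy) by lra.
  assert (E5 : rpow (d Px P0) p = kx) by reflexivity.
  assert (E6 : rpow (d Py P0) p = ky) by reflexivity.
  assert (E7 : rpow (d Px Py) p = kxy) by reflexivity.
  clearbody kx ky kxy.
  intros [u Hu] [v Hv]. unfold d3; simpl.
  destruct u; [| | |exfalso; destruct Hu as [?|[?|?]]; discriminate];
  (destruct v; [| | |exfalso; destruct Hv as [?|[?|?]]; discriminate]);
  unfold f2; cbn [proj1_sig].
  all: match goal with |- nrm _ _ _ _ (minus ?a ?b) <= _ =>
         change (minus a b) with ((fst a - fst b, snd a - snd b) : R*R); cbn [fst snd] end.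
  all: try (apply (G _ 0); [apply Hd0| ]; unfold hw, hh; cbn [fst snd]; simp_abs; rewrite ?E1, ?E2, ?E3, ?E4, ?E5, ?E6, ?E7; lra).
  all: try (apply (G _ 1); [apply Hd0| ]; unfold hw, hh; cbn [fst snd]; simp_abs; rewrite ?E1, ?E2, ?E3, ?E4, ?E5, ?E6, ?E7; lra).
  all: try (apply (G _ (-(1))); [apply Hd0| ]; unfold hw, hh; cbn [fst snd]; simp_abs; rewrite ?E1, ?E2, ?E3, ?E4, ?E5, ?E6, ?E7; lra).
Qed.


Theorem lemma3p7 (p : R) (hp0 : 0 < p) (hp1 : p < 1)
  (d : pt4 -> pt4 -> R) (hd : is_pmetric p d)
  (a : pt4 -> R) (haz : a Pz = 0) :
  let dx0 := rpow (d Px P0) p in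
  let dy0 := rpow (d Py P0) p in
  let dxy := rpow (d Px Py) p in
  let C := rpow (Rabs (a Px + a Py)) p * ((dx0 + dy0 - dxy) / 2)
         + rpow (Rabs (a Px)) p * ((dxy + dx0 - dy0) / 2)
         + rpow (Rabs (a Py)) p * ((dxy + dy0 - dx0) / 2) in
  let N := Fp_norm p (d3 d) s3_0 ((a Px, s3_x) :: (a Py, s3_y) :: nil) in
  C <= rpow (tree_T p T4_nonroot T4_pred T4_V d a) p /\
  C <= rpow N p /\
  (C = rpow N p <->
     (dx0 + dy0 = dxy \/ dx0 + dxy = dy0 \/ dy0 + dxy = dx0 \/
      a Px * a Py = 0 \/ a Px = - a Py)).
Proof.
  intros dx0 dy0 dxy C N.
  assert (Hp : 0 < p < 1) by lra.
  pose proof hd as hd'.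
  destruct hd' as [Hd0 [Hdeq [Hsym Htri]]].
  assert (Hpos : forall u v, u <> v -> 0 < rpow (d u v) p).
  { intros u v Huv. apply rpow_gt0. destruct (Hd0 u v) as [H|H]; auto.
    exfalso; apply Huv; apply Hdeq; auto. }
  assert (H1 : 0 < dx0) by (apply Hpos; discriminate).
  assert (H2 : 0 < dy0) by (apply Hpos; discriminate).
  assert (H3 : 0 < dxy) by (apply Hpos; discriminate).
  set (ax := a Px) in *. set (ay := a Py) in *.
  set (Sa := rpow (Rabs (ax + ay)) p). set (U := rpow (Rabs ax) p). set (V := rpow (Rabs ay) p).
  assert (HS : 0 <= Sa) by apply rpow_ge0.
  assert (HU : 0 <= U) by apply rpow_ge0.
  assert (HV : 0 <= V) by apply rpow_ge0.
  assert (SUV : Sa <= U + V) by apply abs_subadd, Hp.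
  assert (USV : U <= Sa + V).
  { unfold U, Sa, V. replace ax with ((ax + ay) + - ay) at 1 by ring. rewrite <- (Rabs_Ropp ay).
    apply abs_subadd, Hp. }
  assert (VSU : V <= Sa + U).
  { unfold U, Sa, V. replace ay with ((ax + ay) + - ax) at 1 by ring. rewrite <- (Rabs_Ropp ax).
    apply abs_subadd, Hp. }
  assert (Ta : dxy <= dx0 + dy0).
  { unfold dxy, dx0, dy0. pose proof (Htri Px P0 Py) as T. rewrite (Hsym P0 Py) in T. exact T. }
  assert (Tb : dy0 <= dx0 + dxy).
  { unfold dxy, dx0, dy0. pose proof (Htri Py Px P0) as T. rewrite (Hsym Py Px) in T. lra. }
  assert (Tc : dx0 <= dxy + dy0).
  { unfold dxy, dx0, dy0. pose proof (Htri Px Py P0) as T. lra. }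
  split.
  - unfold tree_T, T4_nonroot, T4_pred, T4_V. cbn [List.map Rsum_list]. rewrite haz.
    rewrite rpow_inv2 by (try lra; repeat apply Rplus_le_le_0_compat; try apply rpow_ge0; lra).
    replace (0 + (a Px + (a Py + 0))) with (ax + ay) by (unfold ax, ay; ring).
    replace (a Px + 0) with ax by (unfold ax; ring).
    replace (a Py + 0) with ay by (unfold ay; ring).
    rewrite !Rabs_mult, !rpow_mult by apply Rabs_pos.
    rewrite !(Rabs_pos_eq (d _ _)) by apply Hd0.
    fold Sa U V.
    set (A := rpow (d Pz Px) p). set (B := rpow (d Pz Py) p). set (Z := rpow (d P0 Pz) p).
    assert (T1 : dx0 <= A + Z).
    { pose proof (Htri Px Pz P0) as T. rewrite (Hsym Px Pz), (Hsym Pz P0) in T. exact T. }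
    assert (T2 : dy0 <= B + Z).
    { pose proof (Htri Py Pz P0) as T. rewrite (Hsym Py Pz), (Hsym Pz P0) in T. exact T. }
    assert (T3 : dxy <= A + B).
    { pose proof (Htri Px Pz Py) as T. rewrite (Hsym Px Pz) in T. exact T. }
    unfold C. fold Sa U V.
    set (e1 := Z - (dx0 + dy0 - dxy)/2). set (e2 := A - (dxy + dx0 - dy0)/2).
    set (e3 := B - (dxy + dy0 - dx0)/2).
    assert (Goal : 0 <= Sa * e1 + U * e2 + V * e3).
    { destruct (Rle_lt_dec 0 e1); destruct (Rle_lt_dec 0 e2); destruct (Rle_lt_dec 0 e3).
      all: try (assert (0 <= Sa*e1) by (apply Rmult_le_pos; lra);
                assert (0 <= U*e2) by (apply Rmult_le_pos; lra);
                assert (0 <= V*e3) by (apply Rmult_le_pos; lra); lra).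
      all: try (assert (0 <= U*(e2+e1)) by (apply Rmult_le_pos; unfold e1, e2 in *; lra);
                assert (0 <= V*(e3+e1)) by (apply Rmult_le_pos; unfold e1, e3 in *; lra);
                assert (0 <= (U+V-Sa)*(-e1)) by (apply Rmult_le_pos; lra); lra).
      all: try (assert (0 <= Sa*(e1+e2)) by (apply Rmult_le_pos; unfold e1, e2 in *; lra);
                assert (0 <= V*(e3+e2)) by (apply Rmult_le_pos; unfold e2, e3 in *; lra);
                assert (0 <= (Sa+V-U)*(-e2)) by (apply Rmult_le_pos; lra); lra).
      all: try (assert (0 <= Sa*(e1+e3)) by (apply Rmult_le_pos; unfold e1, e3 in *; lra);
                assert (0 <= U*(e2+e3)) by (apply Rmult_le_pos; unfold e2, e3 in *; lra);
                assert (0 <= (Sa+U-V)*(-e3)) by (apply Rmult_le_pos; lra); lra).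
      all: unfold e1, e2, e3 in *; lra. }
    unfold e1, e2, e3 in Goal. lra.
  - set (m := mm p dx0 dy0 dxy ((ax, ay) : R*R)).
    assert (Hm0 : 0 <= m) by (apply mm_ge0; lra).
    assert (HNm : N = rpow m (1/p)).
    { unfold N, Fp_norm. apply lub_eq.
      - exists (Y2 p dx0 dy0 dxy Hp H1 H2 H3), f2. split; [reflexivity|split].
        + intros u v. apply (f2_lip p Hp d hd H1 H2 H3 u v).
        + change (rpow m (1/p) = nrm p dx0 dy0 dxy ((ax*1 + (ay*0 + 0), ax*0 + (ay*1+0)) : R*R)).
          unfold nrm, m. f_equal. f_equal. f_equal; ring.
      - intros r [Y [f [Hf0 [Hlip Hr]]]]. subst r. cbn [vsum List.map fst snd].
        rewrite plus_zero_r.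
        apply (rpow_le_inv _ _ p); try lra; [apply pB_norm_ge0 | apply rpow_ge0 |].
        rewrite rpow_inv2 by lra.
        set (X := f s3_x). set (W := f s3_y).
        assert (nX : rpow (pB_norm Y X) p <= dx0).
        { pose proof (Hlip s3_x s3_0) as L. rewrite Hf0, (@minus_zero_r (ModuleSpace.AbelianGroup _ (pB_space p Y))) in L.
          apply rpow_le; [lra|]. split; [apply pB_norm_ge0| exact L]. }
        assert (nW : rpow (pB_norm Y W) p <= dy0).
        { pose proof (Hlip s3_y s3_0) as L. rewrite Hf0, (@minus_zero_r (ModuleSpace.AbelianGroup _ (pB_space p Y))) in L.
          apply rpow_le; [lra|]. split; [apply pB_norm_ge0| exact L]. }
        assert (nXW : rpow (pB_norm Y (minus X W)) p <= dxy).
        { pose proof (Hlip s3_x s3_y) as L.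
          apply rpow_le; [lra|]. split; [apply pB_norm_ge0| exact L]. }
        assert (g0 : 0 <= rpow (pB_norm Y X) p) by apply rpow_ge0.
        assert (g1 : 0 <= rpow (pB_norm Y W) p) by apply rpow_ge0.
        assert (g2 : 0 <= rpow (pB_norm Y (minus X W)) p) by apply rpow_ge0.
        unfold m, mm. cbn [fst snd]. rewrite hw_v1, hw_v2, hw_v3. fold Sa U V.
        apply Rmin_glb; [|apply Rmin_glb].
        + rewrite key2. eapply Rle_trans; [apply pn_plus|]. rewrite !pn_scal. fold Sa U.
          assert (Sa * rpow (pB_norm Y W) p <= Sa * dy0) by (apply Rmult_le_compat_l; lra).
          assert (U * rpow (pB_norm Y (minus X W)) p <= U * dxy) by (apply Rmult_le_compat_l; lra).
          lra.
        + rewrite key1. eapply Rle_trans; [apply pn_plus|]. rewrite !pn_scal, Rabs_Ropp. fold Sa V.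
          assert (Sa * rpow (pB_norm Y X) p <= Sa * dx0) by (apply Rmult_le_compat_l; lra).
          assert (V * rpow (pB_norm Y (minus X W)) p <= V * dxy) by (apply Rmult_le_compat_l; lra).
          lra.
        + eapply Rle_trans; [apply pn_plus|]. rewrite !pn_scal. fold U V.
          assert (U * rpow (pB_norm Y X) p <= U * dx0) by (apply Rmult_le_compat_l; lra).
          assert (V * rpow (pB_norm Y W) p <= V * dy0) by (apply Rmult_le_compat_l; lra).
          lra. }
    rewrite HNm, rpow_inv2 by lra.
    unfold m, mm. cbn [fst snd]. rewrite hw_v1, hw_v2, hw_v3. fold Sa U V.
    set (al := (dx0 + dy0 - dxy)/2). set (be := (dxy + dx0 - dy0)/2). set (ga := (dxy + dy0 - dx0)/2).
    assert (EC : C = Sa*al + U*be + V*ga) by (unfold C; fold Sa U V; unfold al, be, ga; ring).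
    assert (D2 : dy0 * Sa + dxy * U - C = ga * (Sa+U-V)) by (rewrite EC; unfold al, be, ga; field).
    assert (D1 : dx0 * Sa + dxy * V - C = be * (Sa+V-U)) by (rewrite EC; unfold al, be, ga; field).
    assert (D3 : dx0 * U + dy0 * V - C = al * (U+V-Sa)) by (rewrite EC; unfold al, be, ga; field).
    assert (P1 : 0 <= ga * (Sa+U-V)) by (apply Rmult_le_pos; unfold ga; lra).
    assert (P2 : 0 <= be * (Sa+V-U)) by (apply Rmult_le_pos; unfold be; lra).
    assert (P3 : 0 <= al * (U+V-Sa)) by (apply Rmult_le_pos; unfold al; lra).
    assert (Cm : C <= Rmin (dy0 * Sa + dxy * U) (Rmin (dx0 * Sa + dxy * V) (dx0 * U + dy0 * V))).
    { apply Rmin_glb; [|apply Rmin_glb]; lra. }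
    split; [exact Cm|]. split.
    + intro E.
      assert (Hc : Rmin (dy0 * Sa + dxy * U) (Rmin (dx0 * Sa + dxy * V) (dx0 * U + dy0 * V)) = dy0 * Sa + dxy * U
        \/ Rmin (dy0 * Sa + dxy * U) (Rmin (dx0 * Sa + dxy * V) (dx0 * U + dy0 * V)) = dx0 * Sa + dxy * V
        \/ Rmin (dy0 * Sa + dxy * U) (Rmin (dx0 * Sa + dxy * V) (dx0 * U + dy0 * V)) = dx0 * U + dy0 * V).
      { assert (RM : forall x y, Rmin x y = x \/ Rmin x y = y) by (intros; unfold Rmin; destruct (Rle_dec x y); auto).
        destruct (RM (dx0 * Sa + dxy * V) (dx0 * U + dy0 * V)) as [R1|R1]; rewrite R1;
        destruct (RM (dy0 * Sa + dxy * U) (Rmin (dx0 * Sa + dxy * V) (dx0 * U + dy0 * V))) as [R2|R2];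
        rewrite R1 in R2; rewrite R2; auto. }
      rewrite <- E in Hc.
      destruct Hc as [Hc|[Hc|Hc]].
      * assert (Z : ga * (Sa+U-V) = 0) by lra. apply Rmult_integral in Z. destruct Z as [Z|Z].
        { right; right; left. unfold ga in Z; lra. }
        destruct (Req_dec (ax+ay) 0) as [Z1|Z1]; [right; right; right; right; lra|].
        destruct (Req_dec ax 0) as [Z2|Z2]; [right; right; right; left; rewrite Z2; ring|].
        exfalso. pose proof (abs_subadd_strict (ax+ay) (-ax) p Hp Z1 ltac:(lra)).
        replace (ax + ay + - ax) with ay in H by ring. rewrite Rabs_Ropp in H. fold Sa U V in H. lra.
      * assert (Z : be * (Sa+V-U) = 0) by lra. apply Rmult_integral in Z. destruct Z as [Z|Z].
        { right; left. unfold be in Z; lra. }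
        destruct (Req_dec (ax+ay) 0) as [Z1|Z1]; [right; right; right; right; lra|].
        destruct (Req_dec ay 0) as [Z2|Z2]; [right; right; right; left; rewrite Z2; ring|].
        exfalso. pose proof (abs_subadd_strict (ax+ay) (-ay) p Hp Z1 ltac:(lra)).
        replace (ax + ay + - ay) with ax in H by ring. rewrite Rabs_Ropp in H. fold Sa U V in H. lra.
      * assert (Z : al * (U+V-Sa) = 0) by lra. apply Rmult_integral in Z. destruct Z as [Z|Z].
        { left. unfold al in Z; lra. }
        destruct (Req_dec ax 0) as [Z1|Z1]; [right; right; right; left; rewrite Z1; ring|].
        destruct (Req_dec ay 0) as [Z2|Z2]; [right; right; right; left; rewrite Z2; ring|].
        exfalso. pose proof (abs_subadd_strict ax ay p Hp Z1 Z2). fold Sa U V in H. lra.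
    + intro H. apply Rle_antisym; [exact Cm|].
      assert (M1 : Rmin (dy0 * Sa + dxy * U) (Rmin (dx0 * Sa + dxy * V) (dx0 * U + dy0 * V)) <= dy0 * Sa + dxy * U) by apply Rmin_l.
      assert (M2 : Rmin (dy0 * Sa + dxy * U) (Rmin (dx0 * Sa + dxy * V) (dx0 * U + dy0 * V)) <= dx0 * Sa + dxy * V)
        by (eapply Rle_trans; [apply Rmin_r| apply Rmin_l]).
      assert (M3 : Rmin (dy0 * Sa + dxy * U) (Rmin (dx0 * Sa + dxy * V) (dx0 * U + dy0 * V)) <= dx0 * U + dy0 * V)
        by (eapply Rle_trans; [apply Rmin_r| apply Rmin_r]).
      destruct H as [H|[H|[H|[H|H]]]].
      * assert (al = 0) by (unfold al; lra). rewrite H0, Rmult_0_l in D3. lra.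
      * assert (be = 0) by (unfold be; lra). rewrite H0, Rmult_0_l in D1. lra.
      * assert (ga = 0) by (unfold ga; lra). rewrite H0, Rmult_0_l in D2. lra.
      * apply Rmult_integral in H. destruct H as [H|H].
        { assert (U = 0) by (unfold U; rewrite H, Rabs_R0; apply rpow_0).
          assert (Sa = V) by (unfold Sa, V; rewrite H, Rplus_0_l; reflexivity).
          assert (ga * (Sa+U-V) = 0) by (rewrite H0, H4; ring). lra. }
        { assert (V = 0) by (unfold V; rewrite H, Rabs_R0; apply rpow_0).
          assert (Sa = U) by (unfold Sa, U; rewrite H, Rplus_0_r; reflexivity).
          assert (be * (Sa+V-U) = 0) by (rewrite H0, H4; ring). lra. }
      * assert (Sa = 0) by (unfold Sa; replace (ax+ay) with 0 by lra; rewrite Rabs_R0; apply rpow_0).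
        assert (U = V) by (unfold U, V; rewrite H, Rabs_Ropp; reflexivity).
        assert (be * (Sa+V-U) = 0) by (rewrite H0, H4; ring). lra.
Qed.
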